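(* Let $(q_l)_{l\ge1}$ be positive numbers with $q_1=1$ and $0<R:=\lim_{l\to\infty}q_l/q_{l+1}<\infty$, and assume (NEQ): $\tilde f(1)<1$, or $\tilde f(1)=1$ and $\tilde g(1)=\infty$. Let $\rho^*>0$ and let $(z^{(m)})_{m\ge1}\subset X_{0+}$ with $\rho(z^{(m)})=\rho^*$ for all $m$ be a minimizing sequence for $\inf\{\tilde A(z): z\in X_{0+},\ \rho(z)=\rho^*\}$. Then $z^{(m)}\to0$ weak-$*$ in $X$ as $m\to\infty$, i.e. $z^{(m)}_l\to0$ for every $l\in\mathbb{N}$.
   Context: $X=\{z=(z_l)_{l\ge1}:\sum_l l|z_l|<\infty\}$ with norm $\|z\|_X=\sum_l l|z_l|$, $X_{0+}$ its nonnegative elements, $\rho(z)=\sum_l lz_l$, $N(z)=\sum_l z_l$. $X$ is the dual of $\{z: z_l/l\to0\}$; a norm-bounded sequence in $X$ converges weak-$*$ iff it converges componentwise. $\tilde q_l=q_lR^l$, $\tilde f(\mu)=\sum_{l\ge1}\tilde q_l\mu^l$, $\tilde g(\mu)=\sum_{l\ge1}l\tilde q_l\mu^l$, $\tilde f(1)=\sum_l\tilde q_l$, $\tilde g(1)=\sum_l l\tilde q_l$ (values in $(0,\infty]$). For $z\in X_{0+}\setminus\{0\}$, $\tilde A(z)=\sum_l z_l\ln\big(z_l/(\tilde q_lN(z))\big)$ with $0\ln0=0$, and $\tilde A(0)=0$. *)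

(* Defs.v *)
From Stdlib Require Import Reals.
From Coquelicot Require Import Coquelicot.
Open Scope R_scope.

(* Convention: a sequence (z_l)_{l>=1} is represented by z : nat -> R,
   where z l is z_l for l >= 1; the entry z 0 is required to be 0 for
   elements of X (so sums over all of nat are sums over l >= 1). *)

Definition in_X0plus (z : nat -> R) : Prop :=
  z O = 0 /\ (forall l, 0 <= z l) /\ ex_series (fun l => INR l * Rabs (z l)).

Definition rho (z : nat -> R) : R := Series (fun l => INR l * z l).

Definition Nz (z : nat -> R) : R := Series z.

Definition qt (q : nat -> R) (Rr : R) (l : nat) : R := q l * Rr ^ l.

(* tilde f(1) = sum_{l>=1} tilde q_l and tilde g(1) = sum_{l>=1} l tilde q_l,
   as values in (0, +oo] (limits of nondecreasing partial sums) *)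
Definition ft1 (q : nat -> R) (Rr : R) : Rbar :=
  Lim_seq (fun n => sum_n_m (qt q Rr) 1 n).
Definition gt1 (q : nat -> R) (Rr : R) : Rbar :=
  Lim_seq (fun n => sum_n_m (fun l => INR l * qt q Rr l) 1 n).

Definition xlog (x c : R) : R :=
  if Req_EM_T x 0 then 0 else x * ln (x / c).

Definition Atilde (q : nat -> R) (Rr : R) (z : nat -> R) : R :=
  Series (fun l => xlog (z l) (qt q Rr l * Nz z)).

(* Main.v *)
Require Import Defs.
From Stdlib Require Import Reals Lra Lia.
From Coquelicot Require Import Coquelicot.
Open Scope R_scope.


Lemma sumSn_R (a : nat -> R) n : sum_n a (S n) = sum_n a n + a (S n).
Proof. rewrite sum_Sn. reflexivity. Qed.

Lemma sumO_R (a : nat -> R) : sum_n a 0 = a 0%nat.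
Proof. apply sum_O. Qed.

Lemma series_le_lim (a b : nat -> R) la lb :
  is_series a la -> is_series b lb -> (forall n, a n <= b n) -> la <= lb.
Proof.
  intros Ha Hb H.
  assert (Hl : Rbar_le la lb).
  { apply (is_lim_seq_le (sum_n a) (sum_n b)); [|exact Ha|exact Hb].
    intro n. unfold sum_n. apply sum_n_m_le. exact H. }
  exact Hl.
Qed.

Lemma sum_n_nonneg (a : nat -> R) : (forall n, 0 <= a n) -> forall n, 0 <= sum_n a n.
Proof.
  intros H n. induction n. rewrite sumO_R; auto. rewrite sumSn_R. specialize (H (S n)). lra.
Qed.

Lemma term_le_sum (a : nat -> R) : (forall n, 0 <= a n) ->
  forall k n, (k <= n)%nat -> a k <= sum_n a n.
Proof.
  intros H k n. induction n; intros Hk.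
  - replace k with 0%nat by lia. rewrite sumO_R; lra.
  - rewrite sumSn_R. destruct (Nat.eq_dec k (S n)) as [->|Hne].
    + pose proof (sum_n_nonneg a H n). lra.
    + assert (k <= n)%nat by lia. specialize (IHn H0). specialize (H (S n)). lra.
Qed.

Lemma term_le_series (a : nat -> R) l : (forall n, 0 <= a n) -> is_series a l ->
  forall k, a k <= l.
Proof.
  intros H Hs k.
  assert (Hl : Rbar_le (a k) l).
  { apply (is_lim_seq_le_loc (fun _ => a k) (sum_n a)); [| apply is_lim_seq_const | exact Hs].
    exists k. intros n Hn. apply term_le_sum; auto. }
  exact Hl.
Qed.

Lemma sum_before (u : nat -> R) L : (forall l, l <> L -> u l = 0) ->
  forall m, (m < L)%nat -> sum_n u m = 0.
Proof.
  intros H m; induction m; intro Hm.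
  - rewrite sumO_R. apply H. lia.
  - rewrite sumSn_R, IHm by lia. rewrite H by lia. lra.
Qed.

Lemma sum_single (u : nat -> R) L : (forall l, l <> L -> u l = 0) ->
  forall n, (L <= n)%nat -> sum_n u n = u L.
Proof.
  intros H n. induction n; intros Hn.
  - replace L with 0%nat by lia. apply sumO_R.
  - rewrite sumSn_R. destruct (Nat.eq_dec L (S n)) as [E|Hne].
    + rewrite (sum_before u L H n) by lia. rewrite E. lra.
    + rewrite IHn by lia. rewrite (H (S n)) by lia. lra.
Qed.

Lemma series_single (u : nat -> R) L : (forall l, l <> L -> u l = 0) ->
  is_series u (u L).
Proof.
  intros H. change (is_lim_seq (sum_n u) (u L)).
  apply (is_lim_seq_ext_loc (fun _ => u L)); [| apply is_lim_seq_const].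
  exists L. intros n Hn. symmetry. apply sum_single; auto.
Qed.

Lemma qt_pos q Rr : (forall l : nat, (1 <= l)%nat -> 0 < q l) -> 0 < Rr ->
  forall l, (1 <= l)%nat -> 0 < qt q Rr l.
Proof. intros Hq HR l Hl. unfold qt. apply Rmult_lt_0_compat; auto. apply pow_lt; auto. Qed.

Lemma qt_lower q Rr
  (hqpos : forall l : nat, (1 <= l)%nat -> 0 < q l)
  (hR : is_lim_seq (fun l : nat => q l / q (S l)) (Finite Rr))
  (hRpos : 0 < Rr) :
  forall eps, 0 < eps -> exists A, 0 <= A /\
    forall l, (1 <= l)%nat -> - A - eps * INR l <= ln (qt q Rr l).
Proof.
  intros eps Heps.
  assert (He : 1 + eps <= exp eps) by apply exp_ineq1_le.
  assert (Heta : 0 < Rr * (exp eps - 1)) by (apply Rmult_lt_0_compat; lra).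
  apply is_lim_seq_spec in hR. destruct (hR (mkposreal _ Heta)) as [N0 HN0]. simpl in HN0.
  set (L0 := max N0 1).
  assert (Hstep : forall l, (L0 <= l)%nat -> ln (qt q Rr l) - eps <= ln (qt q Rr (S l))).
  { intros l Hl.
    assert (Hl1 : (1 <= l)%nat) by lia.
    specialize (HN0 l ltac:(lia)).
    pose proof (hqpos l Hl1) as ql. pose proof (hqpos (S l) ltac:(lia)) as qSl.
    apply Rabs_def2 in HN0. destruct HN0 as [HN0 _].
    assert (Hlt : q l < Rr * exp eps * q (S l)).
    { assert (q l / q (S l) < Rr * exp eps) by lra.
      apply (Rmult_lt_compat_r (q (S l))) in H; auto.
      unfold Rdiv in H. rewrite Rmult_assoc, Rinv_l in H by lra. lra. }
    assert (Hlt2 : qt q Rr l < exp eps * qt q Rr (S l)).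
    { unfold qt. simpl. pose proof (pow_lt Rr l hRpos).
      replace (exp eps * (q (S l) * (Rr * Rr ^ l))) with ((Rr * exp eps * q (S l)) * Rr ^ l) by ring.
      apply Rmult_lt_compat_r; auto. }
    pose proof (qt_pos q Rr hqpos hRpos l Hl1).
    pose proof (qt_pos q Rr hqpos hRpos (S l) ltac:(lia)).
    apply ln_increasing in Hlt2; auto.
    rewrite ln_mult in Hlt2 by (auto; apply exp_pos). rewrite ln_exp in Hlt2. lra. }
  assert (Hind : forall k, ln (qt q Rr L0) - eps * INR k <= ln (qt q Rr (L0 + k))).
  { induction k. simpl. rewrite Nat.add_0_r. lra.
    rewrite S_INR. replace (L0 + S k)%nat with (S (L0 + k)) by lia.
    specialize (Hstep (L0 + k)%nat ltac:(lia)). lra. }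
  set (A := sum_n (fun l => Rabs (ln (qt q Rr l))) L0).
  assert (HA : forall l, (l <= L0)%nat -> Rabs (ln (qt q Rr l)) <= A).
  { intros l Hl. apply (term_le_sum (fun l => Rabs (ln (qt q Rr l)))); auto.
    intros; apply Rabs_pos. }
  exists A. split.
  { pose proof (HA 0%nat ltac:(lia)). pose proof (Rabs_pos (ln (qt q Rr 0))). lra. }
  intros l Hl. pose proof (pos_INR l).
  destruct (Compare_dec.le_lt_dec l L0) as [Hle|Hgt].
  - specialize (HA l Hle). apply Rabs_le_between in HA. nra.
  - specialize (HA L0 (le_n _)). apply Rabs_le_between in HA.
    replace l with (L0 + (l - L0))%nat by lia.
    specialize (Hind (l - L0)%nat).
    assert (INR (l - L0) <= INR (L0 + (l - L0))) by (apply le_INR; lia).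
    nra.
Qed.

Lemma ln_le_xm1 x : 0 < x -> ln x <= x - 1.
Proof. intros Hx. pose proof (exp_ineq1_le (ln x)). rewrite exp_ln in H by auto. lra. Qed.

Lemma xlog_lower x c w : 0 <= x -> 0 < c -> 0 < w -> x - c * w + x * ln w <= xlog x c.
Proof.
  intros Hx Hc Hw. unfold xlog. destruct (Req_EM_T x 0) as [E|E].
  - subst. nra.
  - assert (Hx' : 0 < x) by lra.
    assert (H1 : ln (c * w / x) <= c * w / x - 1) by (apply ln_le_xm1; apply Rdiv_lt_0_compat; nra).
    rewrite ln_div in H1 by nra. rewrite ln_mult in H1 by lra.
    rewrite ln_div by lra.
    assert (x * (c * w / x) = c * w) by (field; lra).
    nra.
Qed.

Lemma xlog_upper x K qv N B : 0 < x -> x <= K -> 0 < qv -> 0 < N -> - ln qv <= B ->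
  xlog x (qv * N) <= x * K + x * B + x * Rabs (ln N).
Proof.
  intros Hx HK Hq HN HB. unfold xlog. destruct (Req_EM_T x 0) as [E|E]; [lra|].
  rewrite ln_div by nra. rewrite ln_mult by lra.
  pose proof (ln_le_xm1 x Hx). pose proof (Rle_abs (- ln N)). rewrite Rabs_Ropp in H0.
  assert (ln x - (ln qv + ln N) <= K + B + Rabs (ln N)) by lra.
  nra.
Qed.

Lemma exp_neg_le x : 0 <= x <= 1 -> exp (- x) <= 1 - x / 2.
Proof.
  intros Hx. rewrite exp_Ropp. pose proof (exp_ineq1_le x). pose proof (exp_pos x).
  apply (Rmult_le_reg_r (exp x)); auto. rewrite Rinv_l by lra. nra.
Qed.

Lemma xlog_zero c : xlog 0 c = 0.
Proof. unfold xlog. destruct (Req_EM_T 0 0); [reflexivity| lra]. Qed.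

Lemma is_series_plusR (a b : nat -> R) la lb :
  is_series a la -> is_series b lb -> is_series (fun n => a n + b n) (la + lb).
Proof. intros. apply (is_series_plus a b la lb); auto. Qed.

Lemma is_series_scalR (c : R) (a : nat -> R) la :
  is_series a la -> is_series (fun n => c * a n) (c * la).
Proof. intros. apply (is_series_scal c a la); auto. Qed.

Lemma is_series_eq (a b : nat -> R) la lb :
  is_series a la -> (forall n, a n = b n) -> la = lb -> is_series b lb.
Proof. intros H E ->. apply (is_series_ext a); auto. Qed.

Lemma ex_series_R_le (a b : nat -> R) : (forall n, Rabs (a n) <= b n) -> ex_series b -> ex_series a.
Proof. intros H Hb. apply (ex_series_le a b); auto. Qed.

Lemma sum_finite (u : nat -> R) n0 : (forall l, (n0 < l)%nat -> u l = 0) ->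
  forall n, (n0 <= n)%nat -> sum_n u n = sum_n u n0.
Proof.
  intros H n. induction n; intros Hn.
  - replace n0 with 0%nat by lia. reflexivity.
  - destruct (Nat.eq_dec n0 (S n)) as [E|E]. rewrite E; reflexivity.
    rewrite sumSn_R, IHn by lia. rewrite H by lia. lra.
Qed.

Lemma series_finite (u : nat -> R) n0 : (forall l, (n0 < l)%nat -> u l = 0) ->
  is_series u (sum_n u n0).
Proof.
  intros H. change (is_lim_seq (sum_n u) (sum_n u n0)).
  apply (is_lim_seq_ext_loc (fun _ => sum_n u n0)); [| apply is_lim_seq_const].
  exists n0. intros n Hn. symmetry. apply sum_finite; auto.
Qed.

Section X.
Variable z : nat -> R.
Hypothesis hz : in_X0plus z.

Lemma X_nonneg l : 0 <= z l.
Proof. destruct hz as [_ [H _]]. auto. Qed.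

Lemma X_z0 : z 0%nat = 0.
Proof. destruct hz as [H _]. auto. Qed.

Lemma X_rho_series : is_series (fun l => INR l * z l) (rho z).
Proof.
  destruct hz as [_ [Hn He]]. unfold rho.
  assert (E : forall l, INR l * Rabs (z l) = INR l * z l) by (intro l; rewrite Rabs_pos_eq; auto).
  apply Series_correct. apply (ex_series_ext _ _ E He).
Qed.

Lemma X_N_series : is_series z (Nz z).
Proof.
  unfold Nz. apply Series_correct.
  apply (ex_series_R_le z (fun l => INR l * z l)).
  - intro l. rewrite Rabs_pos_eq by apply X_nonneg. destruct l.
    + rewrite X_z0. simpl. lra.
    + pose proof (X_nonneg (S l)). assert (1 <= INR (S l)) by (apply (le_INR 1); lia). nra.
  - eexists. apply X_rho_series.
Qed.

Lemma X_le_N l : z l <= Nz z.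
Proof. apply (term_le_series z); [apply X_nonneg | apply X_N_series]. Qed.

Lemma X_lz_le_rho l : INR l * z l <= rho z.
Proof.
  apply (term_le_series (fun l => INR l * z l)); [|apply X_rho_series].
  intro n. pose proof (pos_INR n). pose proof (X_nonneg n). nra.
Qed.

Lemma X_le_rho l : z l <= rho z.
Proof.
  destruct l. rewrite X_z0. pose proof (X_lz_le_rho 0). simpl in H. lra.
  pose proof (X_lz_le_rho (S l)). pose proof (X_nonneg (S l)).
  assert (1 <= INR (S l)) by (apply (le_INR 1); lia). nra.
Qed.

End X.

Lemma exp_neg_le1 x : 0 <= x -> exp (- x) <= 1.
Proof.
  intros Hx. rewrite exp_Ropp. pose proof (exp_ineq1_le x). pose proof (exp_pos x).
  apply (Rmult_le_reg_r (exp x)); auto. rewrite Rinv_l by lra. nra.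
Qed.

Definition Qf q Rr (l : nat) : R := match l with O => 0 | _ => qt q Rr l end.
Definition Hf q Rr (n0 l : nat) : R := if (l <=? n0)%nat then INR l * Qf q Rr l else 0.

Lemma sum_Q q Rr n : sum_n_m (qt q Rr) 1 n = sum_n (Qf q Rr) n.
Proof.
  induction n.
  - rewrite sum_n_m_zero by lia. rewrite sumO_R. reflexivity.
  - rewrite sum_n_Sm by lia. rewrite sumSn_R, <- IHn. reflexivity.
Qed.

Section A.
Variables (q : nat -> R) (Rr : R).
Hypothesis hqpos : forall l : nat, (1 <= l)%nat -> 0 < q l.
Hypothesis hR : is_lim_seq (fun l : nat => q l / q (S l)) (Finite Rr).
Hypothesis hRpos : 0 < Rr.

Lemma Qf_nonneg l : 0 <= Qf q Rr l.
Proof. destruct l. simpl; lra. apply Rlt_le, qt_pos; auto; lia. Qed.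

Variable F1 : R.
Hypothesis hF1 : is_series (Qf q Rr) F1.
Variable z : nat -> R.
Hypothesis hz : in_X0plus z.
Hypothesis hN : 0 < Nz z.

Lemma atilde_ex : ex_series (fun l => xlog (z l) (qt q Rr l * Nz z)).
Proof.
  destruct (qt_lower q Rr hqpos hR hRpos 1 ltac:(lra)) as [A [HA0 HA]].
  set (K := rho z). set (N := Nz z). assert (HN0 : 0 < N) by exact hN.
  apply (ex_series_R_le _ (fun l => (K + Rabs (ln N)) * z l + (A + 1) * (INR l * z l)
                                   + (N * Qf q Rr l + z l))).
  - intro l. pose proof (X_nonneg z hz l) as zl. pose proof (Qf_nonneg l).
    pose proof (X_le_rho z hz l) as zK. fold K in zK.
    assert (HK : 0 <= K) by lra. pose proof (Rabs_pos (ln N)). pose proof (pos_INR l).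
    assert (0 <= (K + Rabs (ln N)) * z l + (A + 1) * (INR l * z l)) by
      (apply Rplus_le_le_0_compat; apply Rmult_le_pos; nra).
    destruct l.
    + rewrite (X_z0 z hz) in *. rewrite xlog_zero, Rabs_R0. change (Qf q Rr 0) with 0. lra.
    + assert (Hq : 0 < qt q Rr (S l)) by (apply qt_pos; auto; lia).
      apply Rabs_le. split.
      * pose proof (xlog_lower (z (S l)) (qt q Rr (S l) * N) 1 zl ltac:(nra) ltac:(lra)).
        rewrite ln_1 in H3. change (Qf q Rr (S l)) with (qt q Rr (S l)) in *. nra.
      * destruct (Req_dec (z (S l)) 0) as [E|E].
        { rewrite E, xlog_zero. change (Qf q Rr (S l)) with (qt q Rr (S l)) in *. nra. }
        assert (HB : - ln (qt q Rr (S l)) <= (A + 1) * INR (S l)).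
        { specialize (HA (S l) ltac:(lia)). assert (1 <= INR (S l)) by (apply (le_INR 1); lia). nra. }
        pose proof (xlog_upper (z (S l)) K (qt q Rr (S l)) N _ ltac:(lra) zK Hq hN HB).
        change (Qf q Rr (S l)) with (qt q Rr (S l)) in *. nra.
  - exists ((K + Rabs (ln N)) * N + (A + 1) * K + (N * F1 + N)).
    apply is_series_plusR; [apply is_series_plusR|apply is_series_plusR].
    + apply is_series_scalR. apply X_N_series; auto.
    + apply is_series_scalR. apply X_rho_series; auto.
    + apply is_series_scalR. auto.
    + apply X_N_series; auto.
Qed.

Lemma atilde_lb (t : R) (n0 : nat) : 0 <= t -> INR n0 * t <= 1 ->
  Nz z - Nz z * F1 + (Nz z * t / 2) * sum_n (Hf q Rr n0) n0 - t * rho z <= Atilde q Rr z.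
Proof.
  intros Ht Hn0. set (N := Nz z). assert (HN0 : 0 < N) by exact hN.
  replace (N - N * F1 + N * t / 2 * sum_n (Hf q Rr n0) n0 - t * rho z) with
    (N + (- N) * F1 + (N * t / 2) * sum_n (Hf q Rr n0) n0 + (- t) * rho z) by ring.
  apply (series_le_lim
    (fun l => z l + (- N) * Qf q Rr l + (N * t / 2) * Hf q Rr n0 l + (- t) * (INR l * z l))
    (fun l => xlog (z l) (qt q Rr l * Nz z))).
  - apply is_series_plusR; [apply is_series_plusR; [apply is_series_plusR|]|].
      * apply X_N_series; auto.
      * apply is_series_scalR. exact hF1.
      * apply is_series_scalR. apply series_finite.
        intros l Hl. unfold Hf. destruct (Nat.leb_spec l n0); [lia|reflexivity].
      * apply is_series_scalR. apply X_rho_series; auto.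
  - unfold Atilde. apply Series_correct. apply atilde_ex.
  - intro l. pose proof (X_nonneg z hz l) as zl. destruct l.
    + rewrite (X_z0 z hz), xlog_zero. unfold Hf. simpl. destruct (0 <=? n0)%nat; lra.
    + assert (Hq : 0 < qt q Rr (S l)) by (apply qt_pos; auto; lia).
      pose proof (xlog_lower (z (S l)) (qt q Rr (S l) * N) (exp (- (t * INR (S l)))) zl
                   ltac:(nra) (exp_pos _)).
      rewrite ln_exp in H. fold N.
      pose proof (pos_INR (S l)).
      assert (Hkey : qt q Rr (S l) * exp (- (t * INR (S l)))
                     <= qt q Rr (S l) - t / 2 * Hf q Rr n0 (S l)).
      { unfold Hf. destruct (Nat.leb_spec (S l) n0).
        - assert (INR (S l) <= INR n0) by (apply le_INR; lia).
          pose proof (exp_neg_le (t * INR (S l)) ltac:(split; nra)).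
          change (Qf q Rr (S l)) with (qt q Rr (S l)) in *. nra.
        - pose proof (exp_neg_le1 (t * INR (S l)) ltac:(nra)). nra. }
      change (Qf q Rr (S l)) with (qt q Rr (S l)) in *. nra.
Qed.
End A.

Lemma ft1_fin q Rr (hqpos : forall l : nat, (1 <= l)%nat -> 0 < q l) (hRpos : 0 < Rr)
  (hNEQ : Rbar_lt (ft1 q Rr) (Finite 1)
          \/ (ft1 q Rr = Finite 1 /\ gt1 q Rr = p_infty)) :
  exists F1, is_series (Qf q Rr) F1 /\ (F1 < 1 \/ (F1 = 1 /\ gt1 q Rr = p_infty)).
Proof.
  set (u := sum_n (Qf q Rr)).
  assert (Hinc : forall n, u n <= u (S n)).
  { intro n. unfold u. rewrite sumSn_R. pose proof (Qf_nonneg q Rr hqpos hRpos (S n)). lra. }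
  pose proof (Lim_seq_correct u (ex_lim_seq_incr u Hinc)) as Hl.
  assert (E : ft1 q Rr = Lim_seq u).
  { unfold ft1. apply Lim_seq_ext. intro n. apply sum_Q. }
  assert (H0 : Rbar_le 0 (Lim_seq u)).
  { apply (is_lim_seq_le (fun _ => 0) u); [| apply is_lim_seq_const | exact Hl].
    intro n. apply sum_n_nonneg. apply Qf_nonneg; auto. }
  rewrite E in hNEQ. destruct (Lim_seq u) as [f| |] eqn:Ef.
  - exists f. split. exact Hl.
    destruct hNEQ as [H|[H1 H2]]. left; exact H. right. split; auto. congruence.
  - destruct hNEQ as [H|[H1 H2]]. simpl in H; contradiction. discriminate.
  - simpl in H0. contradiction.
Qed.

Lemma sum_G q Rr n : sum_n_m (fun l => INR l * qt q Rr l) 1 n = sum_n (fun l => INR l * Qf q Rr l) n.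
Proof.
  induction n.
  - rewrite sum_n_m_zero by lia. rewrite sumO_R. simpl. rewrite Rmult_0_l. reflexivity.
  - rewrite sum_n_Sm by lia. rewrite sumSn_R, <- IHn. reflexivity.
Qed.

Lemma gt1_big q Rr (hqpos : forall l : nat, (1 <= l)%nat -> 0 < q l) (hRpos : 0 < Rr)
  (hg : gt1 q Rr = p_infty) :
  forall M, exists n0, (1 <= n0)%nat /\ M <= sum_n (Hf q Rr n0) n0.
Proof.
  intro M.
  set (v := sum_n (fun l => INR l * Qf q Rr l)).
  assert (Hinc : forall n, v n <= v (S n)).
  { intro n. unfold v. rewrite sumSn_R. pose proof (Qf_nonneg q Rr hqpos hRpos (S n)).
    pose proof (pos_INR (S n)). nra. }
  pose proof (Lim_seq_correct v (ex_lim_seq_incr v Hinc)) as Hl.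
  assert (E : gt1 q Rr = Lim_seq v).
  { unfold gt1. apply Lim_seq_ext. intro n. apply sum_G. }
  rewrite <- E, hg in Hl. apply is_lim_seq_spec in Hl. destruct (Hl M) as [N0 HN0].
  exists (max N0 1). split. lia.
  specialize (HN0 (max N0 1) ltac:(lia)).
  assert (sum_n (Hf q Rr (max N0 1)) (max N0 1) = v (max N0 1)).
  { unfold v. apply sum_n_ext_loc. intros n Hn. unfold Hf.
    destruct (Nat.leb_spec n (max N0 1)); [reflexivity|lia]. }
  lra.
Qed.

Lemma lim_eventually_lt (u : nat -> R) (l : Rbar) (d : R) :
  is_lim_seq u l -> Rbar_lt l (Finite d) -> eventually (fun n => u n < d).
Proof.
  intros Hl Hlt. apply is_lim_seq_spec in Hl. destruct l as [g| |]; simpl in *.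
  - assert (Hp : 0 < d - g) by lra. destruct (Hl (mkposreal _ Hp)) as [N0 HN0].
    exists N0. intros n Hn. specialize (HN0 n Hn). simpl in HN0.
    apply Rabs_def2 in HN0. lra.
  - contradiction.
  - apply Hl.
Qed.

Lemma glb_small q Rr
  (hqpos : forall l : nat, (1 <= l)%nat -> 0 < q l)
  (hR : is_lim_seq (fun l : nat => q l / q (S l)) (Finite Rr))
  (hRpos : 0 < Rr) (rhostar : R) (hrho : 0 < rhostar) :
  forall d, 0 < d -> Rbar_lt (Glb_Rbar (fun a : R => exists w : nat -> R,
               in_X0plus w /\ rho w = rhostar /\ a = Atilde q Rr w)) (Finite d).
Proof.
  intros d Hd.
  destruct (qt_lower q Rr hqpos hR hRpos (d / (2 * rhostar)) ltac:(apply Rdiv_lt_0_compat; lra))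
    as [A [HA0 HA]].
  assert (Hx : 0 <= 2 * rhostar * A / d) by (apply Rdiv_le_0_compat; nra).
  destruct (nfloor_ex _ Hx) as [n [_ Hn]].
  set (L := S n).
  assert (HL : INR L = INR n + 1) by (unfold L; rewrite S_INR; reflexivity).
  assert (HLpos : 0 < INR L) by (pose proof (pos_INR n); lra).
  set (w := fun l => if Nat.eq_dec l L then rhostar / INR L else 0).
  assert (HwL : w L = rhostar / INR L) by (unfold w; destruct (Nat.eq_dec L L); [reflexivity|congruence]).
  assert (Hw0 : forall l, l <> L -> w l = 0) by (intros l Hl; unfold w; destruct (Nat.eq_dec l L); [congruence|reflexivity]).
  assert (Hwpos : 0 < rhostar / INR L) by (apply Rdiv_lt_0_compat; lra).
  assert (HX : in_X0plus w).
  { split; [apply Hw0; unfold L; lia|split].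
    - intro l. destruct (Nat.eq_dec l L) as [->|E]. rewrite HwL; lra. rewrite Hw0; auto; lra.
    - eexists. apply (series_single _ L). intros l Hl. rewrite Hw0 by auto. rewrite Rabs_R0. ring. }
  assert (Hrho : rho w = rhostar).
  { unfold rho. erewrite is_series_unique; [| apply (series_single _ L)].
    2:{ intros l Hl. rewrite Hw0 by auto. ring. }
    rewrite HwL, HL. field. lra. }
  assert (HN : Nz w = rhostar / INR L).
  { unfold Nz. erewrite is_series_unique; [| apply (series_single _ L); exact Hw0]. exact HwL. }
  assert (HA' : Atilde q Rr w = xlog (rhostar / INR L) (qt q Rr L * (rhostar / INR L))).
  { unfold Atilde. erewrite is_series_unique; [| apply (series_single _ L)].
    2:{ intros l Hl. simpl. rewrite Hw0 by auto. apply xlog_zero. }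
    simpl. rewrite HwL, HN. reflexivity. }
  assert (Hq : 0 < qt q Rr L) by (apply qt_pos; auto; unfold L; lia).
  assert (Hval : Atilde q Rr w = - (rhostar / INR L) * ln (qt q Rr L)).
  { rewrite HA'. unfold xlog. destruct (Req_EM_T (rhostar / INR L) 0) as [E|E]; [lra|].
    replace (rhostar / INR L / (qt q Rr L * (rhostar / INR L))) with (/ qt q Rr L)
      by (field; split; lra).
    rewrite ln_Rinv by auto. ring. }
  specialize (HA L ltac:(unfold L; lia)).
  assert (Hlt : Atilde q Rr w < d).
  { rewrite Hval.
    assert (- ln (qt q Rr L) <= A + d / (2 * rhostar) * INR L) by lra.
    assert (E1 : rhostar / INR L * (A + d / (2 * rhostar) * INR L) = rhostar * A / INR L + d / 2)
      by (field; lra).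
    assert (rhostar * A / INR L < d / 2).
    { apply (Rmult_lt_reg_r (INR L)); auto.
      replace (rhostar * A / INR L * INR L) with (rhostar * A) by (field; lra).
      assert (2 * rhostar * A / d * d = 2 * rhostar * A) by (field; lra).
      nra. }
    assert (- (rhostar / INR L) * ln (qt q Rr L) <= rhostar / INR L * (A + d / (2 * rhostar) * INR L)).
    { replace (- (rhostar / INR L) * ln (qt q Rr L)) with (rhostar / INR L * (- ln (qt q Rr L))) by ring.
      apply Rmult_le_compat_l; lra. }
    lra. }
  apply (Rbar_le_lt_trans _ (Finite (Atilde q Rr w))); [|exact Hlt].
  apply (proj1 (Glb_Rbar_correct _)). exists w. auto.
Qed.

Theorem corollary14
  (q : nat -> R) (Rr : R)
  (hqpos : forall l : nat, (1 <= l)%nat -> 0 < q l)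
  (hq1 : q 1%nat = 1)
  (hR : is_lim_seq (fun l : nat => q l / q (S l)) (Finite Rr))
  (hRpos : 0 < Rr)
  (hNEQ : Rbar_lt (ft1 q Rr) (Finite 1)
          \/ (ft1 q Rr = Finite 1 /\ gt1 q Rr = p_infty))
  (rhostar : R) (hrho : 0 < rhostar)
  (z : nat -> nat -> R)
  (hzX : forall m : nat, in_X0plus (z m))
  (hzrho : forall m : nat, rho (z m) = rhostar)
  (hmin : is_lim_seq (fun m : nat => Atilde q Rr (z m))
            (Glb_Rbar (fun a : R => exists w : nat -> R,
               in_X0plus w /\ rho w = rhostar /\ a = Atilde q Rr w))) :
  forall l : nat, (1 <= l)%nat -> is_lim_seq (fun m : nat => z m l) (Finite 0).
Proof.
  intros l0 Hl0. apply is_lim_seq_spec. intro eps. pose proof (cond_pos eps) as Heps.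
  destruct (ft1_fin q Rr hqpos hRpos hNEQ) as [F1 [HF1 Hcase]].
  assert (Hdelta : exists d, 0 < d /\ forall m, eps <= z m l0 -> d <= Atilde q Rr (z m)).
  { destruct Hcase as [Hlt | [Heq Hg]].
    - exists (eps * (1 - F1)). split. nra.
      intros m Hm. pose proof (X_le_N (z m) (hzX m) l0).
      pose proof (atilde_lb q Rr hqpos hR hRpos F1 HF1 (z m) (hzX m) ltac:(lra) 0 0
                   ltac:(lra) ltac:(simpl; lra)).
      nra.
    - destruct (gt1_big q Rr hqpos hRpos Hg (4 * rhostar / eps)) as [n0 [Hn0 HG]].
      assert (Hn0pos : 1 <= INR n0) by (apply (le_INR 1); lia).
      exists (rhostar / INR n0). split. apply Rdiv_lt_0_compat; lra.
      intros m Hm. pose proof (X_le_N (z m) (hzX m) l0).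
      pose proof (atilde_lb q Rr hqpos hR hRpos F1 HF1 (z m) (hzX m) ltac:(lra) (/ INR n0) n0
                   ltac:(left; apply Rinv_0_lt_compat; lra) ltac:(rewrite Rinv_r; lra)) as Hlb.
      rewrite Heq, hzrho in Hlb.
      set (GG := sum_n (Hf q Rr n0) n0) in *.
      set (NN := Nz (z m)) in *.
      assert (HepsG : 4 * rhostar <= eps * GG).
      { assert (4 * rhostar / eps * eps = 4 * rhostar) by (field; lra). nra. }
      assert (HNG : 4 * rhostar <= NN * GG) by nra.
      assert (E : NN - NN * 1 + NN * / INR n0 / 2 * GG - / INR n0 * rhostar
                  = / INR n0 * (NN * GG / 2 - rhostar)).
      { field. lra. }
      rewrite E in Hlb.
      assert (/ INR n0 * rhostar <= / INR n0 * (NN * GG / 2 - rhostar)).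
      { apply Rmult_le_compat_l. left; apply Rinv_0_lt_compat; lra. lra. }
      unfold Rdiv. lra. }
  destruct Hdelta as [d [Hd Hdm]].
  destruct (lim_eventually_lt _ _ d hmin (glb_small q Rr hqpos hR hRpos rhostar hrho d Hd))
    as [N0 HN0].
  exists N0. intros m Hm. specialize (HN0 m Hm). simpl in HN0.
  pose proof (X_nonneg (z m) (hzX m) l0).
  destruct (Rlt_le_dec (z m l0) eps) as [Hlt|Hge].
  - rewrite Rminus_0_r, Rabs_pos_eq by lra. exact Hlt.
  - specialize (Hdm m Hge). lra.
Qed.
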